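(* Let $\Gamma_M$ be a perfect matching graph representing a planar trivalent graph $G$ with perfect matching $M$, $|M|=n$, and let $\widetilde\Gamma_M$ be obtained from $\Gamma_M$ by a flip move (a $0$-, $1$- or $2$-flip), with the perfect matching edges of $\widetilde\Gamma_M$ ordered as in $\Gamma_M$. Then for every state $v\in\{0,1\}^n$, the resolution configuration $D_{\Gamma_M}(v)$ contains an $\eta$-arc (respectively an $m$-arc, respectively a $\Delta$-arc) if and only if $D_{\widetilde\Gamma_M}(v)$ contains an $\eta$-arc (respectively an $m$-arc, respectively a $\Delta$-arc).
   Context: A perfect matching graph $\Gamma_M$ is an embedding in $S^2$ of a planar trivalent graph $G$ together with a perfect matching $M$ of $G$; fix an ordering $M_1,\dots,M_n$ of the edges of $M$. Resolution configurations: $D=(Z(D),A(D))$ with $Z(D)$ a finite set of circles immersed in $S^2$ (union has only transverse double points) and $A(D)$ a finite totally ordered set of disjoint embedded arcs meeting the circles exactly in their endpoints. Surgery $s_A(D)$ along $A$: in a small disk around $A$ meeting the circles in segments $\alpha$ (ends $z,w$) and $\beta$ (ends $x,y$), $z,x$ on one side of $A$ and $w,y$ on the other, replace $\alpha\cup\beta$ by strands $z$–$y$ and $x$–$w$ crossing once transversally; arcs become $A(D)\setminus\{A\}$. An arc $A$ is an $\eta$-, $\Delta$-, or $m$-arc according as $|Z(s_A(D))|-|Z(D)|$ is $0$, $1$, $-1$. Resolutions: for a matching edge $e=uv$, let $a,b$ be the other two edges at $u$ and $c,d$ the other two edges at $v$, labeled so that $a,c$ lie on the same side of $e$. The $0$-resolution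 at $e$ removes $u,v$ and $e$ and joins $a$ to $c$ and $b$ to $d$ by two disjoint strands running parallel to $e$, and places an arc (crossing the former position of $e$) joining these two strands; the $1$-resolution joins $a$ to $d$ and $b$ to $c$ by two strands crossing once transversally, with no arc. For a state $v\in\{0,1\}^n$, $D_{\Gamma_M}(v)$ is the resolution configuration obtained by taking the $v_i$-resolution at $M_i$ for all $i$, arcs ordered by $i$. (Surgery along the arc at $M_i$ turns the $0$-resolution into the $1$-resolution.) Flip move: choose a closed disk $B\subset S^2$ whose boundary avoids the vertices of $\Gamma_M$ and meets $\Gamma_M$ transversally in exactly $k\in\{0,1,2\}$ points, all in interiors of edges; replace $\Gamma_M\cap B$ by its image under a reflection of $B$ (an orientation-reversing involution of $B$ fixing those $k$ boundary points), keeping $\Gamma_M$ outside $B$. This is a $k$-flip; the resulting embedding represents the same pair $(G,M)$. *)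

(* Defs.v *)
(* Combinatorial model of perfect matching graphs in S^2:
   a planar trivalent graph embedded in S^2 is encoded as a combinatorial map
   (rotation system) on a finite set of darts (half-edges). *)
From HB Require Import structures.
From mathcomp Require Import all_boot all_fingroup.

Set Implicit Arguments.
Unset Strict Implicit.
Unset Printing Implicit Defensive.

Section PerfectMatchingGraphs.
Variable T : finType.

(* alpha : edge involution (pairs the two darts of an edge);
   sigma : rotation at vertices (counterclockwise cyclic order of the darts
   around a vertex); vertices are the sigma-orbits, all of size 3. *)
Definition trivalent_map (alpha sigma : {perm T}) : Prop :=
  (forall d, alpha (alpha d) = d /\ alpha d <> d) /\
  (forall d, sigma (sigma (sigma d)) = d /\ sigma d <> d).

Definition map_rel (alpha sigma : {perm T}) : rel T :=
  fun x y => (y == sigma x) || (y == alpha x).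

(* genus 0 (embedding in S^2): Euler formula V - E + F = 2 per component. *)
Definition planar_map (alpha sigma : {perm T}) : Prop :=
  fcard sigma T + fcard (fun d => sigma (alpha d)) T
  = fcard alpha T + 2 * n_comp (map_rel alpha sigma) T.

Variable n : nat.

(* m i is one of the two darts of the matching edge M_(i+1). *)
Definition matched (alpha : {perm T}) (m : 'I_n -> T) (d : T) : bool :=
  [exists i, (d == m i) || (d == alpha (m i))].

Definition perfect_matching (alpha sigma : {perm T}) (m : 'I_n -> T) : Prop :=
  (forall i j, (m j == m i) || (m j == alpha (m i)) -> i = j) /\
  (forall d, matched alpha m d + matched alpha m (sigma d)
             + matched alpha m (sigma (sigma d)) = 1).

(* Strands of the b-resolution at the matching edge e = uv with dart du at u
   and dv = alpha du at v.  With counterclockwise rotations, a := sigma du and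
   c := sigma^2 dv lie on the same side of e, b := sigma^2 du and
   d := sigma dv on the other side.  The 0-resolution joins a-c and b-d,
   the 1-resolution joins a-d and b-c. *)
Definition res_joins (alpha sigma : {perm T}) (r : bool) (du x y : T) : bool :=
  let dv := alpha du in
  let a := sigma du in
  let b := sigma (sigma du) in
  let c := sigma (sigma dv) in
  let d := sigma dv in
  let j := fun p q => ((x == p) && (y == q)) || ((x == q) && (y == p)) in
  if r then j a d || j b c else j a c || j b d.

(* adjacency of the curve system Z(D(v)), on the non-matching darts:
   a dart is joined to the other half of its (non-matching) edge and, through
   the resolution of the adjacent matching edge, to another dart. *)
Definition circle_rel (alpha sigma : {perm T}) (m : 'I_n -> T)
    (v : 'I_n -> bool) : rel T :=
  fun x y => ~~ matched alpha m x && ~~ matched alpha m y &&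
    ((y == alpha x) || [exists i, res_joins alpha sigma (v i) (m i) x y]).

Definition ncircles (alpha sigma : {perm T}) (m : 'I_n -> T)
    (v : 'I_n -> bool) : nat :=
  n_comp (circle_rel alpha sigma m v) [pred d | ~~ matched alpha m d].

(* state v with v_i changed to 1: surgery along the arc at M_i. *)
Definition state_up (v : 'I_n -> bool) (i : 'I_n) : 'I_n -> bool :=
  fun j => (j == i) || v j.

Inductive arc_kind := eta_arc | m_arc | Delta_arc.

(* The arc A at M_i (present iff v_i = 0) is an eta/Delta/m-arc according as
   |Z(s_A(D))| - |Z(D)| is 0, 1, -1. *)
Definition arc_is (k : arc_kind) (before after : nat) : Prop :=
  match k with
  | eta_arc => after = before
  | Delta_arc => after = before.+1
  | m_arc => after.+1 = before
  end.

Definition has_arc (alpha sigma : {perm T}) (m : 'I_n -> T)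
    (v : 'I_n -> bool) (k : arc_kind) : Prop :=
  exists i : 'I_n, v i = false /\
    arc_is k (ncircles alpha sigma m v) (ncircles alpha sigma m (state_up v i)).

(* Flip move: the vertices inside the disk B form a sigma-closed set S of darts
   joined to the outside by at most 2 edges (k-flip, k <= 2); reflecting B
   reverses the cyclic orders at all vertices inside B. *)
Definition flip_move (alpha sigma sigma' : {perm T}) : Prop :=
  exists S : {set T},
    (forall d, (sigma d \in S) = (d \in S)) /\
    #|[set d in S | alpha d \notin S]| <= 2 /\
    (forall d, sigma' d = if d \in S then (sigma^-1)%g d else sigma d).

End PerfectMatchingGraphs.

(* Main.v *)
Require Import Defs.
From mathcomp Require Import all_boot all_fingroup.
Set Implicit Arguments.
Unset Strict Implicit.
Unset Printing Implicit Defensive.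

Lemma conn_ind (T : finType) (e : rel T) (P : T -> Prop) x y :
  P x -> (forall u v, P u -> e u v -> P v) -> connect e x y -> P y.
Proof.
move=> Px step /connectP[p pth ->]; elim: p x Px pth => [|z p IH] x Px //=.
by case/andP=> exz pth; apply: IH (step _ _ Px exz) pth.
Qed.

Lemma even_inv (T : finType) (A : {set T}) (g : T -> T) :
  (forall x, x \in A -> [/\ g x \in A, g x != x & g (g x) = x]) -> ~~ odd #|A|.
Proof.
have [k] := ubnP #|A|; elim: k A => // k IH A ltA gA.
case: (set_0Vmem A) => [->|[x xA]]; first by rewrite cards0.
have [gxA gxx ggx] := gA x xA.
set A' := A :\ x :\ g x.
have cA : #|A| = (#|A'|).+2.
  rewrite (cardsD1 x A) xA (cardsD1 (g x) (A :\ x)) !inE gxx gxA /=.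
  by rewrite add1n.
rewrite cA /=; rewrite negbK; apply: contraT => oA'.
have : ~~ odd #|A'|.
  apply: IH; first by rewrite cA ltnS in ltA; apply: ltnW.
  move=> y; rewrite !inE => /and3P[ygx yx yA].
  have [gyA gyy ggy] := gA y yA.
  split => //; rewrite gyA andbT; apply/andP; split.
  - by apply: contra yx => /eqP e; rewrite -ggy e ggx.
  - by apply: contra ygx => /eqP e; rewrite -ggy e.
by rewrite (negbTE oA').
Qed.

Lemma ncomp_eq_f (T : finType) (e e' : rel T) (a : pred T) (f : T -> T) :
  connect_sym e -> connect_sym e' -> closed e a -> closed e' a ->
  (forall x, a x -> a (f x)) ->
  (forall x y, a x -> a y -> connect e x y = connect e' (f x) (f y)) ->
  (forall y, a y -> exists x, a x /\ connect e' y (f x)) ->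
  n_comp e a = n_comp e' a.
Proof.
move=> se se' ca ca' fa fc fs.
rewrite /n_comp_mem.
set A := [set x | roots e x && a x].
set B := [set x | roots e' x && a x].
have -> : #|predI (roots e) (mem a)| = #|A| by apply: eq_card => x; rewrite !inE.
have -> : #|predI (roots e') (mem a)| = #|B| by apply: eq_card => x; rewrite !inE.
pose F x := root e' (f x).
have injF : {in A &, injective F}.
  move=> x y; rewrite !inE => /andP[rx ax] /andP[ry ay] /rootP.
  move=> /(_ se') c; rewrite -(eqP rx) -(eqP ry); apply/(rootP se).
  by rewrite fc.
rewrite -(card_in_imset injF); apply: eq_card => r; apply/imsetP/idP.
- case=> x; rewrite !inE => /andP[rx ax] ->; rewrite /roots root_root //=.
  rewrite /F eqxx /=.
  have := closed_connect ca' (connect_root e' (f x)).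
  by rewrite -!topredE /= => <-; apply: fa.
- rewrite inE => /andP[rr ar]; have [x [ax cx]] := fs r ar.
  exists (root e x).
    rewrite inE /roots root_root //=.
    by rewrite eqxx /=; have := closed_connect ca (connect_root e x); rewrite -!topredE /= => <-.
  rewrite /F -(eqP rr); apply/(rootP se').
  have ar' : a (root e x).
    by have := closed_connect ca (connect_root e x); rewrite -!topredE /= => <-.
  apply: connect_trans cx _; rewrite -fc //; exact: connect_root.
Qed.
Section Outer.
Variable T : finType.
Variables (N In : pred T) (al : T -> T).
Hypothesis alK : forall x, al (al x) = x.
Hypothesis al_neq : forall x, al x != x.
Hypothesis N_al : forall x, N x -> N (al x).
Hypothesis In_al : forall x, N x -> In (al x) = In x.

Definition E (K : T -> T) : rel T :=
  fun x y => N x && N y && ((y == al x) || (y == K x)).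

Lemma E_symI K : (forall x, N x -> K (K x) = x) -> forall x y, E K x y -> E K y x.
Proof.
move=> KK x y /andP[/andP[Nx Ny] /orP[] /eqP E1]; subst y; rewrite /E Nx Ny.
  by rewrite alK eqxx.
by rewrite KK // eqxx orbT.
Qed.

Lemma E_sym K : (forall x, N x -> K (K x) = x) -> symmetric (E K).
Proof. by move=> KK x y; apply/idP/idP; apply: E_symI. Qed.

Lemma connect_N K x y : N x -> connect (E K) x y -> N y.
Proof.
move=> Nx; apply: (conn_ind (P := fun u => is_true (N u))) Nx _.
by move=> u v _ /andP[/andP[]].
Qed.

Section Core.
Variables (J J' : T -> T).
Hypothesis N_J : forall x, N x -> N (J x).
Hypothesis JK : forall x, N x -> J (J x) = x.
Hypothesis J_neq : forall x, N x -> J x != x.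
Hypothesis N_J' : forall x, N x -> N (J' x).
Hypothesis J'K : forall x, N x -> J' (J' x) = x.
Hypothesis InJ' : forall x, N x -> In (J' x) = In (J x).
Hypothesis same_side : forall x, N x -> In (J x) = In x -> J' x = J x.
Hypothesis cross_neq : forall x, N x -> In (J x) != In x -> J' x != J x.
Hypothesis JJ' : forall x, N x -> J (J' x) = J' (J x).
Hypothesis U4 : #|[set z | N z && In z && ~~ In (J z)]| <= 4.

Local Notation e := (E J).
Local Notation e' := (E J').
Definition E0 : rel T := fun x y => e x y && In x && In y.
Definition U := [set z | N z && In z && ~~ In (J z)].
Definition tau z := J' (J z).

Lemma L_same u v : e u v -> In u = In v -> e' u v.
Proof.
case/andP=> /andP[Nu Nv] /orP[] /eqP E1; subst v => H; rewrite /E Nu Nv /=.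
  by rewrite eqxx.
by rewrite same_side // eqxx orbT.
Qed.

Lemma E0_e' u v : E0 u v -> e' u v.
Proof. by case/andP=> /andP[euv iu] iv; apply: L_same; rewrite ?iu ?iv. Qed.

Lemma E0_sym : connect_sym E0.
Proof.
apply: sym_connect_sym => x y; apply/idP/idP => /andP[/andP[exy ix iy]];
by rewrite /E0 ix iy (E_symI JK exy).
Qed.

Lemma conn_E0 x y : N x -> In x -> connect E0 x y -> N y && In y.
Proof.
move=> Nx ix; apply: (conn_ind (P := fun u => is_true (N u && In u))); first by rewrite Nx ix.
by move=> u v _ /andP[/andP[/andP[/andP[_ ->] _] _] ->].
Qed.

Lemma tau_props z : z \in U -> [/\ tau z \in U, tau z != z & tau (tau z) = z].
Proof.
rewrite inE => /andP[/andP[Nz iz] njz].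
have cr : In (J z) != In z by rewrite iz (negbTE njz).
have NJz := N_J Nz.
split.
- rewrite inE /tau N_J' //= InJ' // JK // iz /=.
  by rewrite JJ' // JK // InJ'.
- apply: contra (cross_neq Nz cr) => /eqP h.
  by rewrite -{1}h J'K.
- by rewrite /tau JJ' // JK // J'K // JK.
Qed.

Lemma U_even : ~~ odd #|U|.
Proof. by apply: (even_inv (g := tau)) => x xU; have [] := tau_props xU. Qed.

Lemma parityK z : N z -> In z -> ~~ odd #|[set y | connect E0 z y] :&: U|.
Proof.
move=> Nz iz; set K := [set y | connect E0 z y].
have KE y : (y \in K) = connect E0 z y by rewrite inE.
have KN y : y \in K -> N y && In y by rewrite KE; apply: conn_E0.
have evK : ~~ odd #|K|.
  apply: (even_inv (g := al)) => y yK; have /andP[Ny iy] := KN _ yK.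
  split; rewrite ?alK ?al_neq //.
  rewrite KE; apply: connect_trans (_ : connect E0 z y) (connect1 _); first by rewrite -KE.
  by rewrite /E0 /E Ny N_al // eqxx /= In_al // iy.
have evKU : ~~ odd #|K :\: U|.
  apply: (even_inv (g := J)) => y; rewrite inE => /andP[yU yK].
  have /andP[Ny iy] := KN _ yK.
  have iJy : In (J y) by move: yU; rewrite inE Ny iy /= negbK.
  split; rewrite ?JK ?J_neq //.
  rewrite inE [J y \in U]inE JK // iy /= andbF /= KE.
  apply: connect_trans (_ : connect E0 z y) (connect1 _); first by rewrite -KE.
  by rewrite /E0 /E Ny N_J // eqxx orbT /= iy iJy.
by move: evK; rewrite -(cardsID U K) oddD (negbTE evKU) addbF.
Qed.

Lemma le1 (A B : {set T}) a b c : #|B| <= 4 -> a \in B -> b \in B -> c \in B ->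
  a != b -> a != c -> b != c -> A \subset B ->
  a \notin A -> b \notin A -> c \notin A -> #|A| <= 1.
Proof.
move=> B4 aB bB cB ab ac bc AB aA bA cA.
have : A \subset B :\ a :\ b :\ c.
  apply/subsetP => x xA; rewrite !inE (subsetP AB _ xA) andbT.
  have xa : x != a by apply/eqP => ex; move: aA; rewrite -ex xA.
  have xb : x != b by apply/eqP => ex; move: bA; rewrite -ex xA.
  have xc : x != c by apply/eqP => ex; move: cA; rewrite -ex xA.
  by rewrite xa xb xc.
move/subset_leq_card => h; apply: leq_trans h _.
move: B4; rewrite (cardsD1 a B) aB (cardsD1 b (B :\ a)) !inE eq_sym ab bB.
by rewrite (cardsD1 c (B :\ a :\ b)) !inE eq_sym bc eq_sym ac cB.
Qed.

Lemma tau_conn z z' : z \in U -> z' \in U -> connect E0 z z' ->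
  connect E0 (tau z) (tau z').
Proof.
move=> zU z'U czz'.
have [tzU tzz ttz] := tau_props zU.
have [tz'U tz'z' ttz'] := tau_props z'U.
have NIz : N z && In z by move: zU; rewrite inE => /andP[].
have NItz : N (tau z) && In (tau z) by move: tzU; rewrite inE => /andP[].
case: (eqVneq z' z) => [-> |z'z]; first exact: connect0.
case: (eqVneq z' (tau z)) => [E1 | z'tz].
  by rewrite E1 ttz E0_sym; rewrite -E1.
have U4' : #|U| <= 4 by [].
have Ue := U_even.
case cz : (connect E0 z (tau z)).
-
  set K := [set y | connect E0 z y].
  apply: contraT => ncon.
  have nK : tau z' \notin K.
    rewrite inE; apply: contra ncon => h.
    by apply: connect_trans _ h; rewrite E0_sym.
  have h1 : #|U :\: K| <= 1.
    apply: (le1 (a := z) (b := tau z) (c := z') U4' zU tzU z'U).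
    + by rewrite eq_sym.
    + by rewrite eq_sym.
    + by rewrite eq_sym.
    + exact: subsetDl.
    + by rewrite !inE connect0.
    + by rewrite !inE cz.
    + by rewrite !inE czz'.
  have h2 : #|U :\: K| = 1.
    apply/eqP; rewrite eqn_leq h1 card_gt0; apply/set0Pn; exists (tau z').
    by rewrite inE nK tz'U.
  have hp := parityK (proj1 (andP NIz)) (proj2 (andP NIz)); rewrite -/K in hp.
  by move: Ue; rewrite -(cardsID K U) oddD h2 addbT negbK setIC (negbTE hp).
- set K := [set y | connect E0 (tau z) y].
  have zK : z \notin K by rewrite inE E0_sym cz.
  have z'K : z' \notin K.
    rewrite inE; apply/negP => h; move: cz; rewrite (connect_trans czz') //.
    by rewrite E0_sym.
  apply: contraT => ncon.
  have tz'K : tau z' \notin K by rewrite inE.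
  have h1 : #|K :&: U| <= 1.
    apply: (le1 (a := z) (b := z') (c := tau z') U4' zU z'U tz'U).
    + by rewrite eq_sym.
    + by apply: contra z'tz => /eqP ->; rewrite ttz'.
    + by rewrite eq_sym.
    + exact: subsetIr.
    + by rewrite inE (negbTE zK).
    + by rewrite inE (negbTE z'K).
    + by rewrite inE (negbTE tz'K).
  have h2 : #|K :&: U| = 1.
    apply/eqP; rewrite eqn_leq h1 card_gt0; apply/set0Pn; exists (tau z).
    by rewrite inE tzU inE connect0.
  have := parityK (proj1 (andP NItz)) (proj2 (andP NItz)).
  by rewrite -/K h2.
Qed.

Lemma L_out x y : N x -> ~~ In x -> connect e x y -> ~~ In y -> connect e' x y.
Proof.
move=> Nx ix cxy iy.
pose Inv u := (~~ In u -> connect e' x u) /\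
  (In u -> exists w, [/\ N w, ~~ In w, In (J w), connect e' x w & connect E0 (J w) u]).
suff : Inv y by case=> [h _]; apply: h.
apply: (conn_ind (P := Inv)) cxy; first by split => [_|]; [exact: connect0 | rewrite (negbTE ix)].
move=> u v [I1 I2] euv; have /andP[/andP[Nu Nv] vv] := euv.
case iu : (In u); case iv : (In v).
- split; first by rewrite iv.
  move=> _; have [w [Nw iw iJw cw cJ]] := I2 iu.
  exists w; split => //; apply: connect_trans cJ (connect1 _).
  by rewrite /E0 euv iu iv.
- split; last by rewrite iv.
  move=> _.
  have vJ : v = J u.
    case/orP: vv => /eqP // E1; move: iv; rewrite E1 In_al // iu //.
  have [w [Nw iw iJw cw cJ]] := I2 iu.
  have JwU : J w \in U by rewrite inE N_J // iJw JK // iw.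
  have uU : u \in U by rewrite inE Nu iu -vJ iv.
  have := tau_conn JwU uU cJ; rewrite /tau JK // -vJ => c2.
  apply: (connect_trans cw); apply: (connect_trans (_ : connect e' w (J' w))).
    by apply: connect1; rewrite /E Nw N_J' // eqxx orbT.
  apply: connect_trans (connect_sub (fun u v h => connect1 (E0_e' h)) c2) (connect1 _).
  by rewrite /E N_J' // Nv J'K // eqxx orbT.
- split; first by rewrite iv.
  move=> _.
  have vJ : v = J u.
    case/orP: vv => /eqP // E1; move: iv; rewrite E1 In_al // iu //.
  exists u; split => //; [by rewrite iu | by rewrite -vJ iv | | rewrite -vJ; exact: connect0].
  by apply: I1; rewrite iu.
- split; last by rewrite iv.
  move=> _; apply: connect_trans (I1 _) (connect1 _); first by rewrite iu.
  by apply: L_same; rewrite ?iu ?iv.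
Qed.

Lemma L_in y : N y -> (forall z, connect e y z -> In z) ->
  forall z, connect e y z = connect e' y z.
Proof.
move=> Ny allin z; apply/idP/idP.
- move=> c; suff : connect e y z /\ connect e' y z by case.
  apply: (conn_ind (P := fun u => connect e y u /\ connect e' y u)) c.
    by split; apply: connect0.
  move=> u v [c1 c2] euv; have c3 := connect_trans c1 (connect1 euv).
  split => //; apply: connect_trans c2 (connect1 _).
  by apply: L_same; rewrite ?allin.
- move=> c; suff : connect e y z /\ connect e' y z by case.
  apply: (conn_ind (P := fun u => connect e y u /\ connect e' y u)) c.
    by split; apply: connect0.
  move=> u v [c1 c2] euv; have c3 := connect_trans c2 (connect1 euv).
  split => //; apply: (connect_trans c1 (connect1 _)).
  have /andP[/andP[Nu Nv] /orP[/eqP E1|/eqP E1]] := euv.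
    by rewrite /E Nu Nv E1 eqxx.
  case sd : (In (J u) == In u).
    by rewrite /E Nu Nv E1 same_side ?(eqP sd) // eqxx orbT.
  have : In (J u).
    apply: allin; apply: (connect_trans c1 (connect1 _)).
    by rewrite /E Nu N_J // eqxx orbT.
  by move=> h; move: sd; rewrite h (allin _ c1).
Qed.

End Core.

Section Final.
Variables (J J' : T -> T).
Hypothesis N_J : forall x, N x -> N (J x).
Hypothesis JK : forall x, N x -> J (J x) = x.
Hypothesis J_neq : forall x, N x -> J x != x.
Hypothesis N_J' : forall x, N x -> N (J' x).
Hypothesis J'K : forall x, N x -> J' (J' x) = x.
Hypothesis J'_neq : forall x, N x -> J' x != x.
Hypothesis InJ' : forall x, N x -> In (J' x) = In (J x).
Hypothesis same_side : forall x, N x -> In (J x) = In x -> J' x = J x.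
Hypothesis cross_neq : forall x, N x -> In (J x) != In x -> J' x != J x.
Hypothesis JJ' : forall x, N x -> J (J' x) = J' (J x).
Hypothesis U4 : #|[set z | N z && In z && ~~ In (J z)]| <= 4.

Lemma InJ'_s x : N x -> In (J x) = In (J' x).
Proof. by move=> Nx; rewrite InJ'. Qed.
Lemma same_side_s x : N x -> In (J' x) = In x -> J x = J' x.
Proof. by move=> Nx h; rewrite (same_side Nx) // -(InJ' Nx). Qed.
Lemma cross_neq_s x : N x -> In (J' x) != In x -> J x != J' x.
Proof. by move=> Nx h; rewrite eq_sym; apply: cross_neq => //; rewrite -(InJ' Nx). Qed.
Lemma JJ'_s x : N x -> J' (J x) = J (J' x).
Proof. by move=> Nx; rewrite JJ'. Qed.
Lemma U4_s : #|[set z | N z && In z && ~~ In (J' z)]| <= 4.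
Proof.
apply: leq_trans U4; apply: subset_leq_card; apply/subsetP => z; rewrite !inE.
by case Nz: (N z) => //=; rewrite InJ'.
Qed.

Let Lo := L_out N_J JK J_neq N_J' J'K InJ' same_side cross_neq JJ' U4.
Let Lo' := L_out N_J' J'K J'_neq N_J JK InJ'_s same_side_s cross_neq_s JJ'_s U4_s.
Let Li := L_in N_J same_side.
Let Li' := L_in N_J' same_side_s.

Lemma ncomp_eq : n_comp (E J) N = n_comp (E J') N.
Proof.
have se := sym_connect_sym (E_sym JK).
have se' := sym_connect_sym (E_sym J'K).
have cl K : closed (E K) N.
  by move=> x y /andP[/andP[Nx Ny] _]; rewrite -!topredE /= Nx Ny.
pose f x := odflt x [pick y | connect (E J) x y && ~~ In y].
have fP x : N x -> (exists2 x0, f x = x0 & [/\ N x0, connect (E J) x x0 & ~~ In x0])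
   \/ (f x = x /\ forall z, connect (E J) x z -> In z).
  move=> Nx; rewrite /f; case: pickP => [x0 /andP[c i] | no] /=.
    by left; exists x0 => //; split => //; apply: connect_N c.
  by right; split => // z c; move: (no z); rewrite c /= => /negbFE.
apply: (ncomp_eq_f (f := f)) => //.
- by move=> x Nx; have [[x0 -> [] //]|[-> _]] := fP x Nx.
- move=> x y Nx Ny.
  have [[x0 -> [Nx0 cx ix]]|[-> ax]] := fP x Nx;
  have [[y0 -> [Ny0 cy iy]]|[-> ay]] := fP y Ny.
  + rewrite (same_connect se cx) (se x0) (same_connect se cy) se.
    by apply/idP/idP => h; [apply: Lo | apply: Lo'].
  + apply/idP/idP => h.
      by move: ix; rewrite (ay x0) //; rewrite se; apply: connect_trans h; rewrite se.
    by move: ix; rewrite (ay x0) // (Li Ny ay) se'.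
  + apply/idP/idP => h.
      by move: iy; rewrite (ax y0) //; apply: connect_trans h cy.
    by move: iy; rewrite (ax y0) // (Li Nx ax).
  + by rewrite (Li Nx ax).
- move=> y Ny; case: (pickP [pred z | connect (E J') y z && ~~ In z]) => [z /andP[cz iz] | no].
    have Nz := connect_N Ny cz.
    exists z; split => //.
    have [[z0 -> [Nz0 cz0 iz0]]|[_ az]] := fP z Nz.
      by apply: connect_trans cz _; apply: Lo.
    by move: iz; rewrite (az z (connect0 _ z)).
  have ay' z : connect (E J') y z -> In z.
    by move=> c; move: (no z); rewrite /= c /= => /negbFE.
  have ay z : connect (E J) y z -> In z.
    by move=> c; apply: (ay' _); rewrite (Li' Ny ay').
  exists y; split => //; have [[y0 -> [_ c i]]|[-> _]] := fP y Ny.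
    by move: i; rewrite (ay _ c).
  exact: connect0.
Qed.
End Final.
End Outer.


Section Concrete.
Variables (T : finType) (n : nat) (alpha : {perm T}) (m : 'I_n -> T) (w : 'I_n -> bool).
Hypothesis alK : forall d, alpha (alpha d) = d.
Hypothesis al_neq : forall d, alpha d <> d.
Hypothesis inj_m : forall i j, (m j == m i) || (m j == alpha (m i)) -> i = j.

Local Notation mt := (matched alpha m).

Lemma mt_al d : mt (alpha d) = mt d.
Proof.
apply: eq_existsb => i; rewrite orbC; congr orb.
  by rewrite (inj_eq perm_inj).
by rewrite -{1}(alK (m i)) (inj_eq perm_inj).
Qed.

Lemma mt_m j : mt (m j).
Proof. by apply/existsP; exists j; rewrite eqxx. Qed.

Lemma mt_am j : mt (alpha (m j)).
Proof. by rewrite mt_al mt_m. Qed.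

Definition rh (d : T) : bool :=
  if [pick i | (d == m i) || (d == alpha (m i))] is Some i then w i else false.

Lemma rh_idx d i : (d == m i) || (d == alpha (m i)) -> rh d = w i.
Proof.
move=> hi; rewrite /rh; case: pickP => [j hj | no]; last by move: (no i); rewrite hi.
suff -> : j = i by [].
case/orP: hi => /eqP ei; case/orP: hj => /eqP ej.
- by apply: inj_m; rewrite -ei ej eqxx.
- by apply: inj_m; rewrite -ei ej eqxx orbT.
- by apply: esym; apply: inj_m; rewrite -ej ei eqxx orbT.
- by apply: inj_m; rewrite -{1}(alK (m i)) -ei ej alK eqxx.
Qed.

Lemma rh_al d : rh (alpha d) = rh d.
Proof.
rewrite /rh; rewrite (eq_pick (Q := fun i => (d == m i) || (d == alpha (m i)))) //.
move=> i /=; rewrite orbC; congr orb.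
  by rewrite (inj_eq perm_inj).
by rewrite -{1}(alK (m i)) (inj_eq perm_inj).
Qed.

Section Sig.
Variable sg : {perm T}.
Hypothesis s3 : forall d, sg (sg (sg d)) = d.
Hypothesis s_neq : forall d, sg d <> d.
Hypothesis sum1 : forall d, mt d + mt (sg d) + mt (sg (sg d)) = 1.

Definition hub x := if mt (sg x) then sg x else sg (sg x).
Definition pos x := ~~ mt (sg x).
Definition Jw x := if pos x == rh (hub x) then sg (alpha (hub x))
                   else sg (sg (alpha (hub x))).

Lemma sg_inj : injective sg.
Proof. by move=> x y e; rewrite -(s3 x) -(s3 y) e. Qed.

Lemma sg12 d : sg d != sg (sg d).
Proof. by apply/negP => /eqP /sg_inj e; exact: (s_neq (esym e)). Qed.

Lemma ssneq d : sg (sg d) != d.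
Proof. by apply/negP => /eqP e; apply: (@s_neq d); rewrite -{1}e s3 ?e. Qed.

Lemma V3 d : mt d -> ~~ mt (sg d) && ~~ mt (sg (sg d)).
Proof. by move: (sum1 d) => /[swap] ->; case: (mt (sg d)); case: (mt (sg (sg d))). Qed.

Lemma V3' x : ~~ mt x -> mt (sg x) = ~~ mt (sg (sg x)).
Proof.
move=> nx; move: (sum1 (sg x)); rewrite s3 (negbTE nx).
by case: (mt (sg x)); case: (mt (sg (sg x))).
Qed.

Lemma mt_hub x : ~~ mt x -> mt (hub x).
Proof. by move=> nx; rewrite /hub; case h: (mt (sg x)) => //; rewrite V3' // in h; case: (mt _) h. Qed.

Lemma hub_sE d : mt d -> hub (sg d) = d.
Proof. by move=> md; have /andP[_ h] := V3 md; rewrite /hub (negbTE h) s3. Qed.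
Lemma pos_sE d : mt d -> pos (sg d) = true.
Proof. by move=> md; have /andP[_ h] := V3 md; rewrite /pos h. Qed.
Lemma hub_ssE d : mt d -> hub (sg (sg d)) = d.
Proof. by move=> md; rewrite /hub s3 md. Qed.
Lemma pos_ssE d : mt d -> pos (sg (sg d)) = false.
Proof. by move=> md; rewrite /pos s3 md. Qed.

Lemma x_hub x : ~~ mt x -> x = if pos x then sg (hub x) else sg (sg (hub x)).
Proof. by move=> nx; rewrite /pos /hub; case: (mt (sg x)) => /=; rewrite s3. Qed.

Lemma J_sd d : mt d -> Jw (sg d) = if rh d then sg (alpha d) else sg (sg (alpha d)).
Proof. by move=> md; rewrite /Jw hub_sE // pos_sE //; case: (rh d). Qed.
Lemma J_ssd d : mt d -> Jw (sg (sg d)) = if rh d then sg (sg (alpha d)) else sg (alpha d).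
Proof. by move=> md; rewrite /Jw hub_ssE // pos_ssE //; case: (rh d). Qed.

Lemma N_J x : ~~ mt x -> ~~ mt (Jw x).
Proof.
move=> nx; have mh : mt (alpha (hub x)) by rewrite mt_al mt_hub.
have /andP[h1 h2] := V3 mh.
by rewrite /Jw; case: ifP.
Qed.

Lemma hub_J x : ~~ mt x -> hub (Jw x) = alpha (hub x).
Proof.
move=> nx; have mh : mt (alpha (hub x)) by rewrite mt_al mt_hub.
by rewrite /Jw; case: ifP => _; rewrite ?hub_ssE ?hub_sE.
Qed.

Lemma JK x : ~~ mt x -> Jw (Jw x) = x.
Proof.
move=> nx; have mh : mt (alpha (hub x)) by rewrite mt_al mt_hub.
rewrite {2}/Jw; rewrite [in RHS](x_hub nx).
case E1: (pos x == rh (hub x)); rewrite ?J_ssd ?J_sd // rh_al alK;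
by move: E1; case: (pos x); case: (rh (hub x)).
Qed.

Lemma J_neq x : ~~ mt x -> Jw x != x.
Proof.
move=> nx; apply/negP => /eqP e; have := hub_J nx; rewrite e => h.
exact: (@al_neq (hub x) (esym h)).
Qed.

Lemma jn_iff x y : ~~ mt x ->
  [exists i, res_joins alpha sg (w i) (m i) x y] = (y == Jw x).
Proof.
move=> nx; apply/idP/idP.
- case/existsP => j; rewrite /res_joins /=.
  have mj := mt_m j; have maj := mt_am j.
  have rj : rh (m j) = w j by apply: rh_idx; rewrite eqxx.
  have raj : rh (alpha (m j)) = w j by apply: rh_idx; rewrite eqxx orbT.
  case wj: (w j);
  (case/orP => /orP[] /andP[/eqP ex /eqP ey]; subst x y);
  rewrite ?J_ssd ?J_sd // ?rj ?raj ?wj ?alK //.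
- move/eqP ->; rewrite /Jw.
  move: (x_hub nx) (mt_hub nx); move: (pos x) (hub x) => p h ex.
  case/existsP => i /orP[] /eqP eh; subst h; rewrite {1}ex; apply/existsP; exists i.
    rewrite (rh_idx (i := i)) ?eqxx //.
    by clear ex; case: p; case: (w i); rewrite /res_joins /= !eqxx /= ?orbT.
  rewrite (rh_idx (i := i)) ?eqxx ?orbT // alK.
  by clear ex; case: p; case: (w i); rewrite /res_joins /= !eqxx /= ?orbT.
Qed.

Lemma circle_relE : circle_rel alpha sg m w =2 E (fun d => ~~ mt d) alpha Jw.
Proof.
move=> x y; rewrite /circle_rel /E; case nx: (~~ mt x) => //=.
by rewrite jn_iff.
Qed.

End Sig.
End Concrete.

Section Flip.
Variables (T : finType) (n : nat) (alpha sigma sigma' : {perm T}) (m : 'I_n -> T).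
Variable S : {set T}.
Hypothesis alK : forall d, alpha (alpha d) = d.
Hypothesis al_neq : forall d, alpha d <> d.
Hypothesis s3 : forall d, sigma (sigma (sigma d)) = d.
Hypothesis s_neq : forall d, sigma d <> d.
Hypothesis inj_m : forall i j, (m j == m i) || (m j == alpha (m i)) -> i = j.
Hypothesis sum1 : forall d, matched alpha m d + matched alpha m (sigma d)
                            + matched alpha m (sigma (sigma d)) = 1.
Hypothesis Sc : forall d, (sigma d \in S) = (d \in S).
Hypothesis B2 : #|[set d in S | alpha d \notin S]| <= 2.
Hypothesis spdef : forall d, sigma' d = if d \in S then (sigma^-1)%g d else sigma d.

Local Notation mt := (matched alpha m).

Lemma sp d : sigma' d = if d \in S then sigma (sigma d) else sigma d.
Proof. by rewrite spdef; case: ifP => // _; rewrite -{1}(s3 d) permK. Qed.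

Lemma Sc' d : (sigma' d \in S) = (d \in S).
Proof. by rewrite sp; case: ifP => h; rewrite ?Sc ?h. Qed.

Lemma sp2 d : sigma' (sigma' d) = if d \in S then sigma d else sigma (sigma d).
Proof. by rewrite [sigma' (sigma' d)]sp Sc' !sp; case: (d \in S) => /=; rewrite ?s3. Qed.

Lemma sp3 d : sigma' (sigma' (sigma' d)) = d.
Proof. by rewrite sp2 Sc' sp; case: (d \in S) => /=; rewrite ?s3. Qed.

Lemma sp_neq d : sigma' d <> d.
Proof.
rewrite sp; case: ifP => _ e; apply: (@s_neq d); [by rewrite -{1}e s3 | exact: e].
Qed.

Lemma sum1' d : mt d + mt (sigma' d) + mt (sigma' (sigma' d)) = 1.
Proof.
rewrite sp2 sp; case: (d \in S) => //; rewrite -(sum1 d).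
by rewrite -addnA [mt (sigma (sigma d)) + _]addnC addnA.
Qed.

Variable w : 'I_n -> bool.
Local Notation J := (Jw alpha m w sigma).
Local Notation J' := (Jw alpha m w sigma').
Local Notation hb := (hub alpha m sigma).
Local Notation ps := (pos alpha m sigma).

Lemma hub'_eq x : ~~ mt x -> hub alpha m sigma' x = hb x.
Proof.
move=> nx; rewrite /hub sp2 sp; have h := V3' s3 sum1 nx.
case xS: (x \in S) => //.
by case e: (mt (sigma x)); move: h; rewrite e; case: (mt (sigma (sigma x))).
Qed.

Lemma pos'_eq x : ~~ mt x -> pos alpha m sigma' x = if x \in S then ~~ ps x else ps x.
Proof.
move=> nx; rewrite /pos sp; have h := V3' s3 sum1 nx.
by case xS: (x \in S) => //; rewrite h negbK.
Qed.

Lemma hub_in x : ~~ mt x -> (hb x \in S) = (x \in S).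
Proof. by move=> nx; rewrite [in RHS](x_hub s3 nx); case: ifP => _; rewrite ?Sc. Qed.

Lemma J'_formula x : ~~ mt x -> J' x =
  if (if hb x \in S then ~~ ps x else ps x) == rh alpha m w (hb x) then
    (if alpha (hb x) \in S then sigma (sigma (alpha (hb x))) else sigma (alpha (hb x)))
  else (if alpha (hb x) \in S then sigma (alpha (hb x)) else sigma (sigma (alpha (hb x)))).
Proof. by move=> nx; rewrite {1}/Jw hub'_eq // pos'_eq // hub_in // (sp2 (alpha (hb x))) sp. Qed.

Lemma Jw_in x : ~~ mt x -> (J x \in S) = (alpha (hb x) \in S).
Proof. by move=> nx; rewrite /Jw; case: ifP => _; rewrite ?Sc. Qed.

Lemma J'_in x : ~~ mt x -> (J' x \in S) = (alpha (hb x) \in S).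
Proof. by move=> nx; rewrite J'_formula //; case aS: (alpha (hb x) \in S); case: ifP => _; rewrite ?Sc aS. Qed.

Lemma mt_ah x : ~~ mt x -> mt (alpha (hb x)).
Proof. by move=> nx; rewrite mt_al // (mt_hub s3 sum1 nx). Qed.

Lemma InJ'_c x : ~~ mt x -> (J' x \in S) = (J x \in S).
Proof. by move=> nx; rewrite J'_in // Jw_in. Qed.

Lemma same_side_c x : ~~ mt x -> (J x \in S) = (x \in S) -> J' x = J x.
Proof.
move=> nx; rewrite Jw_in // -(hub_in nx) => hs; rewrite J'_formula // /Jw hs.
by case: (hb x \in S); case: (ps x); case: (rh alpha m w (hb x)).
Qed.

Lemma cross_neq_c x : ~~ mt x -> (J x \in S) != (x \in S) -> J' x != J x.
Proof.
move=> nx; rewrite Jw_in // -(hub_in nx) => hs; rewrite J'_formula // /Jw.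
have n1 := sg12 s3 s_neq (alpha (hb x)).
case: (hb x \in S) hs; case: (alpha (hb x) \in S) => // _;
by case: (ps x); case: (rh alpha m w (hb x)); rewrite //= eq_sym.
Qed.

Lemma J'_sd d : mt d -> J' (sigma d) =
  if (if d \in S then false else true) == rh alpha m w d then
    (if alpha d \in S then sigma (sigma (alpha d)) else sigma (alpha d))
  else (if alpha d \in S then sigma (alpha d) else sigma (sigma (alpha d))).
Proof.
move=> md; have /andP[n1 _] := V3 sum1 md.
by rewrite J'_formula // (hub_sE s3 sum1 md) (pos_sE sum1 md); case: (d \in S).
Qed.

Lemma J'_ssd d : mt d -> J' (sigma (sigma d)) =
  if (if d \in S then true else false) == rh alpha m w d then
    (if alpha d \in S then sigma (sigma (alpha d)) else sigma (alpha d))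
  else (if alpha d \in S then sigma (alpha d) else sigma (sigma (alpha d))).
Proof.
move=> md; have /andP[_ n2] := V3 sum1 md.
by rewrite J'_formula // (hub_ssE s3 md) (pos_ssE s3 md); case: (d \in S).
Qed.

Lemma JJ'_c x : ~~ mt x -> J (J' x) = J' (J x).
Proof.
move=> nx; have mh := mt_hub s3 sum1 nx; have ma := mt_ah nx.
have eJ : J x = if ps x == rh alpha m w (hb x) then sigma (alpha (hb x))
                else sigma (sigma (alpha (hb x))) by [].
rewrite (J'_formula nx) eJ.
move: (ps x) (hb x) mh ma => p h mh ma.
have rr := rh_al m w alK h.
case hS: (h \in S); case aS: (alpha h \in S); case: p; case r: (rh alpha m w h);
rewrite ?(J_ssd w s3 ma) ?(J_sd w s3 sum1 ma) ?(J'_ssd ma) ?(J'_sd ma) ?rr ?alK ?hS ?aS ?r /=;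
rewrite ?(J_ssd w s3 ma) ?(J_sd w s3 sum1 ma) ?(J'_ssd ma) ?(J'_sd ma) ?rr ?alK ?hS ?aS ?r //.
Qed.

Lemma U4_c : #|[set z | ~~ mt z && (z \in S) && ~~ (J z \in S)]| <= 4.
Proof.
set B := [set d in S | alpha d \notin S].
apply: (@leq_trans #|[set sigma d | d in B] :|: [set sigma (sigma d) | d in B]|).
  apply: subset_leq_card; apply/subsetP => z; rewrite inE => /andP[/andP[nz zS] jz].
  have hB : hb z \in B by rewrite inE hub_in // zS -Jw_in.
  rewrite (x_hub s3 nz) inE; case: ifP => _.
    by apply/orP; left; apply/imsetP; exists (hb z).
  by apply/orP; right; apply/imsetP; exists (hb z).
apply: leq_trans (leq_card_setU _ _).1 _.
have h1 := leq_imset_card sigma B.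
have h2 := leq_imset_card (fun d => sigma (sigma d)) B.
by apply: leq_trans (leq_add h1 h2) _; exact: (leq_add B2 B2).
Qed.

Lemma In_al_cross : (exists z, ~~ mt z && (z \in S) && (J z \notin S)) ->
  forall x, ~~ mt x -> (alpha x \in S) = (x \in S).
Proof.
case=> z /andP[/andP[nz zS] jz].
set Sn := [set d in S | ~~ mt d].
set A := [set d | alpha d \in S].
pose oth x := if mt (sigma x) then sigma (sigma x) else sigma x.
have evSn : ~~ odd #|Sn|.
  apply: (even_inv (g := oth)) => x; rewrite inE => /andP[xS nx].
  have h := V3' s3 sum1 nx.
  rewrite /oth; case e: (mt (sigma x)).
    have /andP[n1 n2] := V3 sum1 e.
    split; first by rewrite inE !Sc xS.
      exact: (ssneq s3 s_neq).
    by rewrite s3 (negbTE nx).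
  have e2 : mt (sigma (sigma x)) by move: h; rewrite e; case: (mt _).
  split; first by rewrite inE Sc xS e.
    by apply/negP => /eqP; apply: s_neq.
  by rewrite e2 s3.
have evA : ~~ odd #|Sn :&: A|.
  apply: (even_inv (g := alpha)) => x; rewrite !inE => /andP[/andP[xS nx] aS].
  split; first by rewrite alK xS aS mt_al // nx.
    by apply/negP => /eqP; apply: al_neq.
  by rewrite alK.
have evBn : ~~ odd #|Sn :\: A|.
  by move: evSn; rewrite -(cardsID A Sn) oddD (negbTE evA).
set B := [set d in S | alpha d \notin S].
have hB : hb z \in B by rewrite inE hub_in // zS -Jw_in.
have sub : hb z |: (Sn :\: A) \subset B.
  apply/subsetP => y; rewrite !inE => /orP[/eqP -> | /andP[na /andP[yS _]]].
    by move: hB; rewrite inE.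
  by rewrite yS na.
have Bn0 : Sn :\: A = set0.
  apply: contraTeq B2 => /set0Pn [y yBn]; rewrite -ltnNge.
  have yB : hb z \notin Sn :\: A.
    by rewrite !inE (mt_hub s3 sum1 nz) !andbF.
  apply: leq_trans (subset_leq_card sub); rewrite cardsU1 yB add1n ltnS.
  have : 0 < #|Sn :\: A| by apply/card_gt0P; exists y.
  by case: #|Sn :\: A| evBn => // [[]].
move=> x nx; case xS: (x \in S).
  apply: contraTT isT => aS.
  have : x \in Sn :\: A by rewrite !inE xS nx (negbTE aS).
  by rewrite Bn0 inE.
apply/negP => aS.
have : alpha x \in Sn :\: A by rewrite !inE aS mt_al // nx alK xS.
by rewrite Bn0 inE.
Qed.

Lemma ncirc_eq : ncircles alpha sigma' m w = ncircles alpha sigma m w.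
Proof.
rewrite /ncircles (eq_n_comp (eq_connect (circle_relE w alK inj_m sp3 sum1'))).
rewrite (eq_n_comp (eq_connect (circle_relE w alK inj_m s3 sum1))).
have ea : [pred d | ~~ mt d] =i (fun d => ~~ mt d) by [].
rewrite !(eq_n_comp_r ea).
have s3' := sp3; have sn' := sp_neq; have su' := sum1'.
case: (boolP [exists z, ~~ mt z && (z \in S) && (J z \notin S)]) => [/existsP cr | nocr].
  have Ial := In_al_cross cr.
  symmetry.
  apply: (@ncomp_eq _ (fun d => ~~ mt d) (fun d => d \in S) alpha).
  - exact: alK.
  - by move=> x; apply/negP => /eqP; apply: al_neq.
  - by move=> x /=; rewrite mt_al.
  - exact: Ial.
  - exact: (N_J w alK s3 sum1).
  - exact: (JK w alK s3 sum1).
  - exact: (J_neq w alK al_neq s3 sum1).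
  - exact: (N_J w alK s3' su').
  - exact: (JK w alK s3' su').
  - exact: (J_neq w alK al_neq s3' su').
  - exact: InJ'_c.
  - exact: same_side_c.
  - exact: cross_neq_c.
  - exact: JJ'_c.
  - exact: U4_c.
have ss x : ~~ mt x -> (J x \in S) = (x \in S).
  move=> nx; apply/idP/idP => h; apply: contraT => h'; case/negP: nocr; apply/existsP.
    by exists (J x); rewrite (N_J w alK s3 sum1 nx) h (JK w alK s3 sum1 nx) h'.
  by exists x; rewrite nx h h'.
apply: eq_n_comp; apply: eq_connect => x y; rewrite /E.
case nx: (~~ mt x) => //=; by rewrite same_side_c // ss.
Qed.

End Flip.

Unset Implicit Arguments.

Theorem mainTheorem7 (T : finType) (n : nat) (alpha sigma sigma' : {perm T})
    (m : 'I_n -> T) :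
  trivalent_map alpha sigma -> planar_map alpha sigma ->
  perfect_matching alpha sigma m ->
  flip_move alpha sigma sigma' -> planar_map alpha sigma' ->
  forall (v : 'I_n -> bool) (k : arc_kind),
    has_arc alpha sigma m v k <-> has_arc alpha sigma' m v k.
Proof.
move=> [tal tsg] _ [pinj psum] [S [Sc [B2 spd]]] _ v k.
have alK d : alpha (alpha d) = d by case: (tal d).
have al_neq d : alpha d <> d by case: (tal d).
have s3 d : sigma (sigma (sigma d)) = d by case: (tsg d).
have s_neq d : sigma d <> d by case: (tsg d).
have H w : ncircles alpha sigma' m w = ncircles alpha sigma m w.
  exact: (ncirc_eq alK al_neq s3 s_neq pinj psum Sc B2 spd w).
rewrite /has_arc; split; case=> i [vi a]; exists i; split => //.
  by rewrite !H.
by rewrite !H in a.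
Qed.
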